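(* Let $p$ be a positive integer, $H$ a graph, $T$ a complete rooted ternary tree and $V\subseteq V(T(H))$ with $OC(T,V)\subsetneq V(T)$. Let $T_1,\dots,T_q$ be a minimal sequence of largest subtrees of $T$ with respect to $V$ lacking $p$. Let $T^*$ be the tree obtained from $T$ by deleting the vertices of $T_q$, and $V^*=V\cap V(T^*(H))$. Then $OC(T^*,V^* )\subsetneq V(T^* )$.
   Context: Complete rooted ternary tree: rooted tree, all root-leaf paths of equal length, every non-leaf vertex has exactly 3 children. Graph $T(H)$: for $V(H)=\{1,\dots,m\}$, vertices $v^i$ ($v\in V(T)$), each $\{v^1,\dots,v^m\}$ spanning a copy $H^v$ of $H$, plus edges $u^iv^i$ for $uv\in E(T)$; for a subtree $T'$, $T'(H)$ is the subgraph induced by the copies $H^v$, $v\in V(T')$. $OC(T,V)=\{u\in V(T): V(H^u)\cap V\neq\emptyset\}$. An immediate subtree of $T$ consists of a child of the root and all its descendants; it is largest w.r.t. $V$ if $|OC(T,V)\cap V(T')|$ is maximum among immediate subtrees. A sequence of largest subtrees: $T_1=T$, $V_1=V$, $T_{i+1}$ a largest immediate subtree of $T_i$ w.r.t. $V_i$, $V_{i+1}=V_i\cap V(T_{i+1}(H))$. It is minimal lacking $p$ if $|OC(T_1,V_1)|-|OC(T_q,V_q)|\geq p$ and $|OC(T_1,V_1)|-|OC(T_{q-1},V_{q-1})|<p$. *)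

(* Defs.v *)
From mathcomp Require Import all_boot.
Set Implicit Arguments. Unset Strict Implicit. Unset Printing Implicit Defensive.

(* The complete rooted ternary tree of depth d: vertices are addresses,
   i.e. words over {0,1,2} of length <= d; the root is the empty word and the
   children of a word s (of length < d) are the words rcons s c. *)
Definition tvert (d : nat) : finType := {k : 'I_d.+1 & k.-tuple 'I_3}.

Definition addr (d : nat) (v : tvert d) : seq 'I_3 := val (tagged v).

Definition tedge (d : nat) : rel (tvert d) :=
  fun u v => (addr v == rcons (addr u) (last ord0 (addr v)) :> seq _)
             && (size (addr v) == (size (addr u)).+1)
          || (addr u == rcons (addr v) (last ord0 (addr u)) :> seq _)
             && (size (addr u) == (size (addr v)).+1).

Definition subtree (d : nat) (s : seq 'I_3) : {set tvert d} :=
  [set v | prefix s (addr v)].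

(* The graph T(H): vertex set V(T) x V(H); edges inside each copy H^v, and
   u^i v^i for uv an edge of T. *)
Definition TH_edge (d : nat) (H : finType) (e : rel H) : rel (tvert d * H) :=
  fun x y => ((x.1 == y.1) && e x.2 y.2) || ((x.2 == y.2) && tedge x.1 y.1).

Definition VTH (d : nat) (H : finType) (A : {set tvert d}) : {set tvert d * H} :=
  [set x | x.1 \in A].

Definition OC (d : nat) (H : finType) (A : {set tvert d}) (V : {set tvert d * H})
  : {set tvert d} := [set u in A | [exists h : H, (u, h) \in V]].

(* i-th subtree of the sequence determined by child choices cs
   (0-based: T_(i+1) is rooted at take i cs) and V_(i+1). *)
Definition Tseq (d : nat) (cs : seq 'I_3) (i : nat) : {set tvert d} :=
  subtree d (take i cs).
Definition Vseq (d : nat) (H : finType) (V : {set tvert d * H}) (cs : seq 'I_3)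
  (i : nat) : {set tvert d * H} := V :&: VTH H (Tseq d cs i).

Definition largest_child (d : nat) (H : finType) (s : seq 'I_3)
  (W : {set tvert d * H}) (c : 'I_3) : Prop :=
  forall c' : 'I_3,
    #|OC (subtree d s) W :&: subtree d (rcons s c')|
      <= #|OC (subtree d s) W :&: subtree d (rcons s c)|.

(* cs encodes a sequence of largest subtrees T_1 = T, ..., T_q with
   q = size cs + 1 (each T_(j+1) is a non-leaf subtree). *)
Definition largest_seq (d : nat) (H : finType) (V : {set tvert d * H})
  (cs : seq 'I_3) : Prop :=
  size cs <= d /\
  forall j, j < size cs ->
    largest_child (take j cs) (Vseq V cs j) (nth ord0 cs j).

Definition minimal_lacking (d : nat) (H : finType) (V : {set tvert d * H})
  (cs : seq 'I_3) (p : nat) : Prop :=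
  let q := (size cs).+1 in
  1 < q /\
  p <= #|OC (Tseq d cs 0) (Vseq V cs 0)| - #|OC (Tseq d cs q.-1) (Vseq V cs q.-1)| /\
  #|OC (Tseq d cs 0) (Vseq V cs 0)| - #|OC (Tseq d cs q.-2) (Vseq V cs q.-2)| < p.

(* Main.v *)
Require Import Defs.
From mathcomp Require Import all_boot.

Lemma addr_inj d : injective (@addr d).
Proof.
move=> [k t] [k' t']; rewrite /addr /= => E.
have Ek : k = k' by apply: val_inj; rewrite /= -(size_tuple t) -(size_tuple t') E.
subst k'; congr existT; exact: val_inj.
Qed.

Section Shift.
Variables (d : nat) (s : seq 'I_3) (c c' : 'I_3).
Definition gsh (x : seq 'I_3) := rcons s c' ++ drop (size s).+1 x.
Definition fsh (v : tvert d) : tvert d :=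
  @Tagged _ (tag v) (fun k : 'I_d.+1 => k.-tuple 'I_3) (insubd (tagged v) (gsh (val (tagged v)))).

Lemma addr_fsh v : prefix (rcons s c) (addr v) -> addr (fsh v) = gsh (addr v).
Proof.
move=> /prefixP [w Ew]; rewrite /fsh /addr /= val_insubd.
rewrite /addr in Ew; rewrite /gsh Ew.
have -> : size (rcons s c' ++ drop (size s).+1 (rcons s c ++ w)) == tag v by
  rewrite -(size_tuple (tagged v)) Ew drop_size_cat ?size_rcons // !size_cat !size_rcons.
by [].
Qed.

Lemma card_sub_le : #|subtree d (rcons s c)| <= #|subtree d (rcons s c')|.
Proof.
rewrite -(@card_in_imset _ _ fsh).
  apply: subset_leq_card; apply/subsetP => y /imsetP [v]; rewrite !inE => Hv ->.
  by rewrite addr_fsh // /gsh prefix_prefix.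
move=> u v; rewrite !inE => Hu Hv E.
have := congr1 (@addr d) E; rewrite !addr_fsh // /gsh => /eqP; rewrite eqseq_cat // => /andP [_ /eqP Ed].
apply: addr_inj.
have H (x : tvert d) : prefix (rcons s c) (addr x) -> addr x = rcons s c ++ drop (size s).+1 (addr x).
  by move/prefixP=> [w ->]; rewrite drop_size_cat ?size_rcons.
by rewrite (H u Hu) (H v Hv) Ed.
Qed.
End Shift.

Theorem lemma6 (p : nat) (H : finType) (e : rel H) (d : nat)
  (V : {set tvert d * H}) (cs : seq 'I_3) :
  0 < p ->
  symmetric e -> irreflexive e ->
  OC [set: tvert d] V \proper [set: tvert d] ->
  largest_seq V cs ->
  minimal_lacking V cs p ->
  let Tstar := [set: tvert d] :\: Tseq d cs (size cs) in
  let Vstar := V :&: VTH H Tstar in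
  OC Tstar Vstar \proper Tstar.
Proof.
move=> _ _ _ Hprop [_ Hls] Hml; rewrite /=.
set Tstar := [set: tvert d] :\: _.
have n0 : 0 < size cs by case: Hml.
set j := (size cs).-1.
have jlt : j < size cs by rewrite /j prednK.
set s := take j cs; set c := nth ord0 cs j.
have Etk : take (size cs) cs = rcons s c by rewrite -{1}(prednK n0) (take_nth ord0 jlt).
have Hl := Hls j jlt; rewrite -/s -/c in Hl.
rewrite properE; apply/andP; split.
  by apply/subsetP => u; rewrite inE => /andP [].
apply/negP => Hsub.
have occ u : u \in Tstar -> exists h, (u, h) \in V.
  move=> Hu; move/subsetP: Hsub => /(_ u Hu); rewrite inE => /andP [_ /existsP [h]].
  by rewrite inE => /andP [Hh _]; exists h.
have inTs u : u \in Tstar = ~~ prefix (rcons s c) (addr u).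
  by rewrite !inE /Tseq Etk andbT.
pose c' : 'I_3 := if c == ord0 then (inord 1) else ord0.
have Hcc : c' != c.
  rewrite /c'; case: (c =P ord0) => [->|Hc]; last by apply/eqP => E; apply: Hc.
  by apply/eqP => /(congr1 val) /=; rewrite inordK.
pose X c'' := OC (subtree d s) (Vseq V cs j) :&: subtree d (rcons s c'').
have inX u c'' : prefix (rcons s c'') (addr u) -> (exists h, (u, h) \in V) -> u \in X c''.
  move=> Hp [h Hh]; rewrite !inE Hp andbT.
  have Ps : prefix s (addr u) := prefix_trans (prefix_rcons s c'') Hp.
  rewrite Ps /=; apply/existsP; exists h; rewrite !inE Hh /= /Tseq. 
  exact: Ps.
have sib : subtree d (rcons s c') \subset X c'.
  apply/subsetP => u; rewrite inE => Hu; apply: inX => //; apply: occ.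
  rewrite inTs; apply/negP => Hc.
  move: Hu Hc; rewrite !prefixE !size_rcons => /eqP -> /eqP /rcons_inj [] /eqP.
  by rewrite (negbTE Hcc).
have XcS : X c \subset subtree d (rcons s c) by apply: subsetIr.
have Eq : X c = subtree d (rcons s c).
  apply/eqP; rewrite eqEcard XcS /=.
  apply: (leq_trans (card_sub_le d s c c')).
  apply: (leq_trans (subset_leq_card sib)).
  exact: (Hl c').
move: Hprop; rewrite properE => /andP [_ /negP]; apply.
apply/subsetP => u _; rewrite inE /=.
have [h Hh] : exists h, (u, h) \in V.
  case: (boolP (prefix (rcons s c) (addr u))) => Hp; last by apply: occ; rewrite inTs.
  have : u \in X c by rewrite Eq inE.
  rewrite !inE => /andP [/andP [_ /existsP [h]]]; rewrite !inE => /andP [Hh _] _.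
  by exists h.
by rewrite inE; apply/existsP; exists h.
Qed.
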